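(* Let $p\ge 1$, $c>0$ and $\beta>0$ be constants. The boundary value problem $$x'''+c\,x^p\, x''=0\ \text{ on } [0,\infty),\qquad x(0)=0=x'(0),\qquad \lim_{t\to\infty}x'(t)=\beta$$ has at most one solution (i.e., its solution is unique). *)

(* Defs.v *)
From Stdlib Require Import Reals.
From Coquelicot Require Import Coquelicot.
Open Scope R_scope.

(* Stdlib's Rpower gives Rpower 0 p = 1, so we patch the value at 0.
   Values for a < 0 are irrelevant: solutions are required to be >= 0. *)
Definition rpow (a p : R) : R := if Rle_dec a 0 then 0 else Rpower a p.

(* x is a solution of  x''' + c x^p x'' = 0 on [0,oo),
   x(0) = 0, x'(0) = 0 (right derivative at 0), lim_{t->oo} x'(t) = beta.
   x1, x2, x3 are the first three derivatives of x on (0,oo). *)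
Definition is_solution (p c beta : R) (x : R -> R) : Prop :=
  exists x1 x2 x3 : R -> R,
    (forall t, 0 <= t -> 0 <= x t) /\
    (forall t, 0 < t ->
       is_derive x t (x1 t) /\ is_derive x1 t (x2 t) /\ is_derive x2 t (x3 t) /\
       x3 t + c * rpow (x t) p * x2 t = 0) /\
    x 0 = 0 /\
    filterlim (fun h => (x h - x 0) / h) (at_right 0) (locally 0) /\
    is_lim x1 p_infty beta.

(* Main.v *)
Require Import Defs.
From Stdlib Require Import Reals.
From Coquelicot Require Import Coquelicot.
Open Scope R_scope.
From Stdlib Require Import Lra Classical.

Lemma rlim_iff (f : R -> R) L :
  filterlim f (at_right 0) (locally L) <->
  (forall eps, 0 < eps -> exists d, 0 < d /\ forall t, 0 < t < d -> Rabs (f t - L) < eps).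
Proof.
  rewrite filterlim_locally; split.
  - intros H eps He. destruct (H (mkposreal eps He)) as [d Hd].
    exists d; split; [apply cond_pos|]. intros t [Ht1 Ht2]. apply (Hd t).
    + unfold ball; simpl; unfold AbsRing_ball, abs, minus, plus, opp; simpl.
      replace (t + - 0) with t by ring; rewrite Rabs_right; lra.
    + lra.
  - intros H eps. destruct (H eps (cond_pos eps)) as [d [Hd1 Hd2]].
    exists (mkposreal d Hd1). intros t Ht Ht0. apply Hd2. split; [lra|].
    change (Rabs (t - 0) < d) in Ht.
    rewrite Rminus_0_r in Ht. rewrite Rabs_right in Ht; lra.
Qed.

Lemma ilim_iff (f : R -> R) (L : R) :
  is_lim f p_infty L <->
  (forall eps, 0 < eps -> exists M, forall t, M < t -> Rabs (f t - L) < eps).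
Proof.
  unfold is_lim. change (Rbar_locally (Finite L)) with (locally L). rewrite filterlim_locally; split.
  - intros H eps He. destruct (H (mkposreal eps He)) as [M HM].
    exists M. intros t Ht. apply (HM t Ht).
  - intros H eps. destruct (H eps (cond_pos eps)) as [M HM]. exists M. intros t Ht. apply (HM t Ht).
Qed.

Lemma rlim_plus (f g : R -> R) (a b : R) : filterlim f (at_right 0) (locally a) -> filterlim g (at_right 0) (locally b) ->
  filterlim (fun t => f t + g t) (at_right 0) (locally (a + b)).
Proof. intros Hf Hg. exact (filterlim_comp_2 f g Rplus Hf Hg (filterlim_plus a b)). Qed.
Lemma rlim_mult (f g : R -> R) (a b : R) : filterlim f (at_right 0) (locally a) -> filterlim g (at_right 0) (locally b) ->
  filterlim (fun t => f t * g t) (at_right 0) (locally (a * b)).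
Proof. intros Hf Hg. exact (filterlim_comp_2 f g Rmult Hf Hg (filterlim_mult a b)). Qed.
Lemma rlim_const (a : R) : filterlim (fun _ : R => a) (at_right 0) (locally (T:=R_UniformSpace) a).
Proof. apply filterlim_const. Qed.
Lemma rlim_id : filterlim (fun t : R => t) (at_right 0) (locally (T:=R_UniformSpace) 0).
Proof. apply rlim_iff. intros eps He. exists eps. split; [lra|]. intros t Ht.
  rewrite Rminus_0_r, Rabs_right; lra. Qed.
Lemma rlim_opp (f : R -> R) (a : R) : filterlim f (at_right 0) (locally a) -> filterlim (fun t => - f t) (at_right 0) (locally (- a)).
Proof. intros Hf. replace (-a) with ((-1)*a) by ring.
  eapply filterlim_ext; [|apply (rlim_mult _ _ _ _ (rlim_const (-1)) Hf)]. intros; simpl; ring. Qed.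
Lemma rlim_ext (f g : R -> R) (a d : R) : 0 < d -> (forall t, 0 < t < d -> f t = g t) ->
  filterlim f (at_right 0) (locally a) -> filterlim g (at_right 0) (locally a).
Proof. intros Hd H Hf. rewrite rlim_iff in *. intros eps He. destruct (Hf eps He) as [d' [Hd' H']].
  exists (Rmin d d'). split. apply Rmin_pos; lra. intros t Ht.
  rewrite <- H. apply H'. split; try lra. pose proof (Rmin_r d d'); lra. pose proof (Rmin_l d d'); lra. Qed.

Lemma rlim_le (f : R -> R) (L C d : R) : 0 < d -> filterlim f (at_right 0) (locally L) ->
  (forall t, 0 < t < d -> C <= f t) -> C <= L.
Proof. intros Hd Hf H. destruct (Rle_or_lt C L) as [|HL]; [auto|].
  rewrite rlim_iff in Hf. destruct (Hf (C - L)) as [d' [Hd' H']]; [lra|].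
  set (t := Rmin d d' / 2). assert (0 < Rmin d d') by (apply Rmin_pos; lra).
  pose proof (Rmin_l d d'). pose proof (Rmin_r d d').
  specialize (H t). specialize (H' t). unfold t in *.
  assert (E1 : 0 < Rmin d d' / 2 < d) by lra. assert (E2 : 0 < Rmin d d' / 2 < d') by lra.
  specialize (H E1). specialize (H' E2). apply Rabs_def2 in H'. lra. Qed.
Lemma rlim_ge (f : R -> R) (L C d : R) : 0 < d -> filterlim f (at_right 0) (locally L) ->
  (forall t, 0 < t < d -> f t <= C) -> L <= C.
Proof. intros Hd Hf H. assert (-C <= -L); [|lra].
  apply (rlim_le (fun t => - f t) (-L) (-C) d Hd (rlim_opp _ _ Hf)). intros t Ht; specialize (H t Ht); lra. Qed.
Lemma ilim_le (f : R -> R) (L C M : R) : is_lim f p_infty L -> (forall t, M < t -> C <= f t) -> C <= L.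
Proof. intros Hf H. destruct (Rle_or_lt C L) as [|HL]; [auto|].
  rewrite ilim_iff in Hf. destruct (Hf (C - L)) as [M' H']; [lra|].
  specialize (H (Rmax M M' + 1)). specialize (H' (Rmax M M' + 1)).
  pose proof (Rmax_l M M'). pose proof (Rmax_r M M').
  assert (C <= f (Rmax M M' + 1)) by (apply H; lra).
  assert (E : Rabs (f (Rmax M M' + 1) - L) < C - L) by (apply H'; lra).
  apply Rabs_def2 in E. lra. Qed.
Lemma ilim_ge (f : R -> R) (L C M : R) : is_lim f p_infty L -> (forall t, M < t -> f t <= C) -> L <= C.
Proof. intros Hf H. destruct (Rle_or_lt L C) as [|HL]; [auto|].
  rewrite ilim_iff in Hf. destruct (Hf (L - C)) as [M' H']; [lra|].
  pose proof (Rmax_l M M'). pose proof (Rmax_r M M').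
  assert (f (Rmax M M' + 1) <= C) by (apply H; lra).
  assert (E : Rabs (f (Rmax M M' + 1) - L) < L - C) by (apply H'; lra).
  apply Rabs_def2 in E. lra. Qed.

Lemma D_eq (f : R -> R) x l l' : is_derive f x l -> l = l' -> is_derive f x l'.
Proof. intros H ->; exact H. Qed.
Lemma D_plus (f g : R -> R) x a b : is_derive f x a -> is_derive g x b -> is_derive (fun t => f t + g t) x (a + b).
Proof. intros Hf Hg. exact (is_derive_plus f g x a b Hf Hg). Qed.
Lemma D_minus (f g : R -> R) x a b : is_derive f x a -> is_derive g x b -> is_derive (fun t => f t - g t) x (a - b).
Proof. intros Hf Hg. exact (is_derive_minus f g x a b Hf Hg). Qed.
Lemma D_mult (f g : R -> R) x a b : is_derive f x a -> is_derive g x b -> is_derive (fun t => f t * g t) x (a * g x + f x * b).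
Proof. intros Hf Hg. exact (is_derive_mult f g x a b Hf Hg Rmult_comm). Qed.
Lemma D_scal (f : R -> R) x k a : is_derive f x a -> is_derive (fun t => k * f t) x (k * a).
Proof. apply is_derive_scal. Qed.
Lemma D_const (k x : R) : is_derive (fun _ => k) x 0.
Proof. exact (is_derive_const k x). Qed.
Lemma D_lin (k x : R) : is_derive (fun t => k * t) x k.
Proof. pose proof (D_scal (fun t => t) x k 1 (is_derive_id x)) as H. simpl in H. rewrite Rmult_1_r in H. exact H. Qed.
Lemma D_exp_lin (k x : R) : is_derive (fun t => exp (k * t)) x (k * exp (k * x)).
Proof. apply (D_eq _ _ (scal k (exp (k * x)))).
  exact (is_derive_comp exp (fun t => k * t) x _ k (is_derive_exp _) (D_lin k x)). reflexivity. Qed.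
Lemma D_comp_lin (f : R -> R) (k x a : R) : is_derive f (k * x) a -> is_derive (fun t => f (k * t)) x (k * a).
Proof. intros H. apply (D_eq _ _ (scal k a)). exact (is_derive_comp f (fun t => k * t) x a k H (D_lin k x)). reflexivity. Qed.

Lemma D_cont (f : R -> R) x a : is_derive f x a -> continuity_pt f x.
Proof. intros H. apply continuity_pt_filterlim. apply (ex_derive_continuous f x). exists a; exact H. Qed.

Lemma mvt (f df : R -> R) a b : 0 < a <= b -> (forall t, 0 < t -> is_derive f t (df t)) ->
  exists c, a <= c <= b /\ f b - f a = df c * (b - a).
Proof. intros Hab Hd. destruct (MVT_gen f a b df) as [c [Hc Hc']].
  - intros t Ht. apply Hd. rewrite Rmin_left in Ht by lra. lra.
  - intros t Ht. apply (D_cont f t (df t)). apply Hd. rewrite Rmin_left in Ht by lra. lra.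
  - exists c. rewrite Rmin_left in Hc by lra. rewrite Rmax_right in Hc by lra. split; auto. Qed.

Lemma mvt_le (f df : R -> R) a b K : 0 < a <= b -> (forall t, 0 < t -> is_derive f t (df t)) ->
  (forall t, a <= t <= b -> df t <= K) -> f b - f a <= K * (b - a).
Proof. intros Hab Hd HK. destruct (mvt f df a b Hab Hd) as [c [Hc ->]].
  apply Rmult_le_compat_r. lra. auto. Qed.
Lemma mvt_ge (f df : R -> R) a b K : 0 < a <= b -> (forall t, 0 < t -> is_derive f t (df t)) ->
  (forall t, a <= t <= b -> K <= df t) -> K * (b - a) <= f b - f a.
Proof. intros Hab Hd HK. destruct (mvt f df a b Hab Hd) as [c [Hc ->]].
  apply Rmult_le_compat_r. lra. auto. Qed.

Lemma rpow_nonneg a p : 0 <= rpow a p.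
Proof. unfold rpow. destruct (Rle_dec a 0). lra. unfold Rpower. left; apply exp_pos. Qed.
Lemma rpow_pos a p : 0 < a -> rpow a p = Rpower a p.
Proof. intros H. unfold rpow. destruct (Rle_dec a 0); [lra|auto]. Qed.
Lemma rpow_0 p : rpow 0 p = 0.
Proof. unfold rpow. destruct (Rle_dec 0 0); [auto|exfalso; apply n; lra]. Qed.
Lemma rpow_mono a b p : 0 <= p -> 0 <= a <= b -> rpow a p <= rpow b p.
Proof. intros Hp Hab. unfold rpow at 1. destruct (Rle_dec a 0). apply rpow_nonneg.
  rewrite rpow_pos by lra. apply Rle_Rpower_l; lra. Qed.
Lemma rpow_scale s a p : rpow (exp s * a) p = exp (p * s) * rpow a p.
Proof. pose proof (exp_pos s). unfold rpow. destruct (Rle_dec a 0).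
  - destruct (Rle_dec (exp s * a) 0). ring. exfalso; apply n. 
    replace 0 with (exp s * 0) by ring. apply Rmult_le_compat_l; lra.
  - destruct (Rle_dec (exp s * a) 0). exfalso. assert (0 < exp s * a) by (apply Rmult_lt_0_compat; lra). lra.
    rewrite <- Rpower_mult_distr by lra. f_equal. unfold Rpower. rewrite ln_exp. f_equal; ring. Qed.

Lemma Rpower_deriv p t : 0 < t -> is_derive (fun u => Rpower u p) t (p * Rpower t (p - 1)).
Proof. intros Ht. apply is_derive_Reals. apply derivable_pt_lim_power. exact Ht. Qed.

Lemma rpow_lip_aux a b p M : 1 <= p -> 0 <= b <= a -> a <= M ->
  0 <= rpow a p - rpow b p <= p * Rpower (M + 1) (p - 1) * (a - b).
Proof. intros Hp Hab HM.
  assert (HL : forall u, 0 < u <= M -> Rpower u (p - 1) <= Rpower (M+1) (p-1)).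
  { intros u Hu. apply Rle_Rpower_l; lra. }
  assert (HP : forall u, 0 < Rpower u (p-1)) by (intros; apply exp_pos).
  destruct (Rle_dec b 0) as [Hb|Hb].
  - assert (b = 0) by lra. subst b. rewrite rpow_0.
    destruct (Rle_dec a 0) as [Ha|Ha].
    + assert (a = 0) by lra. subst a. rewrite rpow_0. lra.
    + apply Rnot_le_lt in Ha. rewrite rpow_pos by lra.
      replace (Rpower a p) with (a * Rpower a (p - 1)).
      2:{ replace p with (1 + (p - 1)) at 2 by ring. rewrite Rpower_plus, Rpower_1 by lra. reflexivity. }
      pose proof (HL a ltac:(lra)). pose proof (HP a).
      assert (a * Rpower a (p - 1) <= a * Rpower (M + 1) (p - 1)) by (apply Rmult_le_compat_l; lra).
      assert (0 <= (p - 1) * (Rpower (M + 1) (p - 1) * a)) by (apply Rmult_le_pos; [lra|apply Rmult_le_pos; lra]).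
      split. nra. lra.
  - apply Rnot_le_lt in Hb. rewrite !rpow_pos by lra.
    pose proof (mvt_le (fun u => Rpower u p) (fun u => p * Rpower u (p - 1)) b a (p * Rpower (M + 1) (p - 1))
      ltac:(lra) (fun t Ht => Rpower_deriv p t Ht)) as H1.
    pose proof (mvt_ge (fun u => Rpower u p) (fun u => p * Rpower u (p - 1)) b a 0
      ltac:(lra) (fun t Ht => Rpower_deriv p t Ht)) as H2.
    simpl in H1, H2. split.
    + assert (0 * (a - b) <= Rpower a p - Rpower b p); [|lra]. apply H2. intros t Ht. pose proof (HP t). nra.
    + apply H1. intros t Ht. apply Rmult_le_compat_l; [lra|]. apply HL. lra.
Qed.

Lemma rpow_lip a b p M : 1 <= p -> 0 <= a <= M -> 0 <= b <= M ->
  Rabs (rpow a p - rpow b p) <= p * Rpower (M + 1) (p - 1) * Rabs (a - b).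
Proof. intros Hp Ha Hb. destruct (Rle_dec b a).
  - destruct (rpow_lip_aux a b p M) as [H1 H2]; try lra.
    rewrite !Rabs_right by lra. lra.
  - destruct (rpow_lip_aux b a p M) as [H1 H2]; try lra.
    rewrite Rabs_left1 by lra. rewrite Rabs_left1 by lra. lra.
Qed.

Lemma rlim_minus (f g : R -> R) (a b : R) : filterlim f (at_right 0) (locally a) -> filterlim g (at_right 0) (locally b) ->
  filterlim (fun t => f t - g t) (at_right 0) (locally (a - b)).
Proof. intros Hf Hg. apply (rlim_plus f (fun t => - g t) a (- b) Hf (rlim_opp g b Hg)). Qed.

Definition sol_on p c (x x1 x2 x3 : R -> R) := forall t, 0 < t ->
  is_derive x t (x1 t) /\ is_derive x1 t (x2 t) /\ is_derive x2 t (x3 t) /\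
  x3 t + c * rpow (x t) p * x2 t = 0.

Definition good p c (x x1 x2 x3 : R -> R) (a : R) :=
  sol_on p c x x1 x2 x3 /\ (forall t, 0 < t -> 0 <= x t) /\
  filterlim x (at_right 0) (locally (T:=R_UniformSpace) 0) /\
  filterlim x1 (at_right 0) (locally (T:=R_UniformSpace) 0) /\
  filterlim x2 (at_right 0) (locally (T:=R_UniformSpace) a) /\
  (forall t, 0 < t -> 0 < x2 t <= a) /\ (forall t, 0 < t -> 0 <= x1 t).

Lemma key_ineq X X1 X2 rx ry y2 c L a :
  0 < c -> 0 <= L -> 0 <= rx -> 0 < y2 <= a -> Rabs (rx - ry) <= L * Rabs X ->
  2*X*X1 + 2*X1*X2 + 2*X2*((- c * rx * X2) - c * (rx - ry) * y2)
  <= (2 + c * L * a) * (X*X + X1*X1 + X2*X2).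
Proof. intros Hc HL Hrx Hy HD.
  set (D := rx - ry) in *.
  assert (A1 : - (D * X2) <= Rabs D * Rabs X2) by (rewrite <- Rabs_mult; apply Rle_trans with (Rabs (-(D*X2))); [apply Rle_abs| rewrite Rabs_Ropp; lra]).
  assert (A2 : Rabs D * Rabs X2 <= L * Rabs X * Rabs X2) by (apply Rmult_le_compat_r; [apply Rabs_pos|lra]).
  assert (A3 : 2 * (Rabs X * Rabs X2) <= X*X + X2*X2).
  { pose proof (Rsqr_abs X) as E1. pose proof (Rsqr_abs X2) as E2. unfold Rsqr in E1, E2.
    assert (0 <= (Rabs X - Rabs X2) * (Rabs X - Rabs X2)) by (apply Rle_0_sqr). nra. }
  assert (A4 : 0 <= L * Rabs X * Rabs X2) by (apply Rmult_le_pos; [apply Rmult_le_pos; [lra|apply Rabs_pos]|apply Rabs_pos]).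
  assert (A5 : - (D * X2) * y2 <= L * Rabs X * Rabs X2 * a).
  { apply Rle_trans with (L * Rabs X * Rabs X2 * y2). apply Rmult_le_compat_r; lra. apply Rmult_le_compat_l; lra. }
  assert (A6 : 0 <= rx * (X2 * X2)) by (apply Rmult_le_pos; [lra|apply Rle_0_sqr]).
  assert (A7 : c * (L * a) * (2 * (Rabs X * Rabs X2)) <= c * (L * a) * (X*X + X2*X2)).
  { apply Rmult_le_compat_l; [|lra]. apply Rmult_le_pos; [lra|]. apply Rmult_le_pos; lra. }
  assert (A8 : 0 <= X1 * X1) by apply Rle_0_sqr.
  assert (A9 : 2*X*X1 <= X*X + X1*X1) by (pose proof (Rle_0_sqr (X - X1)); unfold Rsqr in *; nra).
  assert (A10 : 2*X1*X2 <= X1*X1 + X2*X2) by (pose proof (Rle_0_sqr (X1 - X2)); unfold Rsqr in *; nra).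
  assert (A11 : 0 <= c * L * a * (X * X)) by (apply Rmult_le_pos; [apply Rmult_le_pos; [apply Rmult_le_pos|]|apply Rle_0_sqr]; lra).
  assert (A12 : 0 <= c * L * a * (X2 * X2)) by (apply Rmult_le_pos; [apply Rmult_le_pos; [apply Rmult_le_pos|]|apply Rle_0_sqr]; lra).
  assert (A13 : 2*X2*(- c * rx * X2 - c * D * y2) = -2 * c * (rx * (X2*X2)) + 2 * c * (- (D * X2) * y2)) by ring.
  rewrite A13.
  assert (A14 : 2 * c * (- (D * X2) * y2) <= 2 * c * (L * Rabs X * Rabs X2 * a)) by (apply Rmult_le_compat_l; lra).
  assert (A15 : 0 <= c * (rx * (X2 * X2))) by (apply Rmult_le_pos; lra).
  assert (E : 2 * c * (L * Rabs X * Rabs X2 * a) = c * (L * a) * (2 * (Rabs X * Rabs X2))) by ring.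
  assert (E2 : (2 + c * L * a) * (X*X + X1*X1 + X2*X2) = 2*(X*X+X1*X1+X2*X2) + c * L * a * (X*X) + c*L*a*(X1*X1) + c*L*a*(X2*X2)) by ring.
  assert (A16 : 0 <= c * L * a * (X1 * X1)) by (apply Rmult_le_pos; [apply Rmult_le_pos; [apply Rmult_le_pos|]|]; lra).
  assert (E3 : c * (L * a) * (X*X + X2*X2) = c*L*a*(X*X) + c*L*a*(X2*X2)) by ring.
  pose proof (Rle_0_sqr X). pose proof (Rle_0_sqr X2). unfold Rsqr in *. lra.
Qed.

Lemma good_x_mono p c x x1 x2 x3 a : good p c x x1 x2 x3 a ->
  forall s t, 0 < s <= t -> x s <= x t.
Proof. intros [Hs [_ [_ [_ [_ [_ H1]]]]]] s t Hst.
  assert (0 * (t - s) <= x t - x s); [|lra].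
  apply (mvt_ge x x1); auto. intros u Hu; apply Hs; auto. intros u Hu; apply H1; lra. Qed.

Lemma uniq p c x x1 x2 x3 y y1 y2 y3 a : 1 <= p -> 0 < c ->
  good p c x x1 x2 x3 a -> good p c y y1 y2 y3 a -> forall t, 0 < t -> x t = y t.
Proof.
  intros Hp Hc Gx Gy t Ht.
  pose proof Gx as [Sx [Px [Lx [Lx1 [Lx2 [Bx2 Bx1]]]]]].
  pose proof Gy as [Sy [Py [Ly [Ly1 [Ly2 [By2 By1]]]]]].
  set (M := Rmax (x t) (y t)).
  assert (HMx : forall s, 0 < s <= t -> 0 <= x s <= M).
  { intros s Hs. split. apply Px; lra. apply Rle_trans with (x t). apply (good_x_mono _ _ _ _ _ _ _ Gx); lra. apply Rmax_l. }
  assert (HMy : forall s, 0 < s <= t -> 0 <= y s <= M).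
  { intros s Hs. split. apply Py; lra. apply Rle_trans with (y t). apply (good_x_mono _ _ _ _ _ _ _ Gy); lra. apply Rmax_r. }
  set (L := p * Rpower (M + 1) (p - 1)).
  assert (HL : 0 <= L). { unfold L. apply Rmult_le_pos. lra. left; apply exp_pos. }
  assert (Ha : 0 < a). { destruct (Bx2 1); lra. }
  set (K := 2 + c * L * a).
  set (S := fun u => (x u - y u) * (x u - y u) + (x1 u - y1 u) * (x1 u - y1 u) + (x2 u - y2 u) * (x2 u - y2 u)).
  set (dS := fun u => 2*(x u - y u)*(x1 u - y1 u) + 2*(x1 u - y1 u)*(x2 u - y2 u) + 2*(x2 u - y2 u)*(x3 u - y3 u)).
  assert (DS : forall u, 0 < u -> is_derive S u (dS u)).
  { intros u Hu. destruct (Sx u Hu) as [D0 [D1 [D2 _]]]. destruct (Sy u Hu) as [E0 [E1 [E2 _]]].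
    eapply D_eq. unfold S. apply D_plus; [apply D_plus|]; apply D_mult; apply D_minus; eauto.
    unfold dS; simpl; ring. }
  assert (HdS : forall u, 0 < u <= t -> dS u <= K * S u).
  { intros u Hu. destruct (Sx u ltac:(lra)) as [_ [_ [_ Ox]]]. destruct (Sy u ltac:(lra)) as [_ [_ [_ Oy]]].
    assert (E3 : x3 u - y3 u = (- c * rpow (x u) p * (x2 u - y2 u)) - c * (rpow (x u) p - rpow (y u) p) * y2 u) by lra.
    unfold dS, S. rewrite E3. apply key_ineq; auto. apply rpow_nonneg. apply By2; lra.
    apply rpow_lip; auto. }
  set (G := fun u => S u * exp (- K * u)).
  assert (DG : forall u, 0 < u -> is_derive G u ((dS u - K * S u) * exp (- K * u))).
  { intros u Hu. eapply D_eq. apply D_mult. apply DS; auto. apply D_exp_lin. simpl; ring. }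
  assert (HS0 : forall u, 0 <= S u).
  { intros u. unfold S. pose proof (Rle_0_sqr (x u - y u)). pose proof (Rle_0_sqr (x1 u - y1 u)).
    pose proof (Rle_0_sqr (x2 u - y2 u)). unfold Rsqr in *. lra. }
  assert (HK : 0 <= K). { unfold K. assert (0 <= c * L * a) by (apply Rmult_le_pos; [apply Rmult_le_pos|]; lra). lra. }
  assert (HGe : forall e, 0 < e < t -> G t <= S e).
  { intros e He.
    assert (G t - G e <= 0 * (t - e)).
    { apply (mvt_le G (fun u => (dS u - K * S u) * exp (- K * u)) e t 0). lra. exact DG. intros u Hu.
      assert (dS u - K * S u <= 0) by (pose proof (HdS u ltac:(lra)); lra).
      pose proof (exp_pos (- K * u)). nra. }
    assert (G e <= S e).
    { unfold G. assert (exp (- K * e) <= 1).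
      { rewrite <- exp_0. destruct (Req_dec (-K * e) 0) as [E|E]. rewrite E; lra. left; apply exp_increasing. nra. }
      pose proof (HS0 e). pose proof (exp_pos (-K*e)). nra. }
    lra. }
  assert (LS : filterlim S (at_right 0) (locally (T:=R_UniformSpace) 0)).
  { assert (LS' : filterlim S (at_right 0) (locally (T:=R_UniformSpace) ((0 - 0) * (0 - 0) + (0 - 0) * (0 - 0) + (a - a) * (a - a)))).
    { unfold S. apply rlim_plus; [apply rlim_plus|]; apply rlim_mult; apply rlim_minus; auto. }
    replace ((0 - 0) * (0 - 0) + (0 - 0) * (0 - 0) + (a - a) * (a - a)) with 0 in LS' by ring. exact LS'. }
  assert (G t <= 0) by (apply (rlim_le S 0 (G t) t Ht LS); auto).
  assert (S t = 0).
  { unfold G in H. pose proof (exp_pos (-K*t)). pose proof (HS0 t).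
    assert (S t * exp (-K*t) = 0) by nra. apply Rmult_integral in H2. destruct H2; lra. }
  unfold S in H0. pose proof (Rle_0_sqr (x t - y t)). pose proof (Rle_0_sqr (x1 t - y1 t)).
  pose proof (Rle_0_sqr (x2 t - y2 t)). unfold Rsqr in *.
  assert ((x t - y t) * (x t - y t) = 0) by lra. apply Rmult_integral in H4. lra.
Qed.

Lemma rlim_scale (f : R -> R) (L m : R) : 0 < m -> filterlim f (at_right 0) (locally L) ->
  filterlim (fun t => f (m * t)) (at_right 0) (locally L).
Proof. intros Hm Hf. rewrite rlim_iff in *. intros eps He. destruct (Hf eps He) as [d [Hd H]].
  exists (d / m). split. apply Rdiv_lt_0_compat; lra. intros t Ht. apply H.
  split. apply Rmult_lt_0_compat; lra.
  destruct Ht as [_ Ht]. apply Rmult_lt_compat_l with (r := m) in Ht; [|lra].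
  replace (m * (d / m)) with d in Ht by (field; lra). exact Ht. Qed.

Lemma ilim_scale (f : R -> R) (L m k : R) : 0 < m -> 0 < k -> is_lim f p_infty L ->
  is_lim (fun t => k * f (m * t)) p_infty (k * L).
Proof. intros Hm Hk Hf. rewrite ilim_iff in *. intros eps He.
  destruct (Hf (eps / k)) as [M H]. apply Rdiv_lt_0_compat; lra.
  exists (M / m). intros t Ht. 
  assert (M < m * t). { apply Rmult_lt_compat_l with (r := m) in Ht; [|lra].
    replace (m * (M / m)) with M in Ht by (field; lra). exact Ht. }
  specialize (H _ H0). replace (k * f (m * t) - k * L) with (k * (f (m * t) - L)) by ring.
  rewrite Rabs_mult, Rabs_right by lra.
  apply Rmult_lt_compat_l with (r := k) in H; [|lra]. replace (k * (eps / k)) with eps in H by (field; lra). exact H. Qed.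

Lemma good_scale p c x x1 x2 x3 a s : good p c x x1 x2 x3 a ->
  let l := exp s in let m := exp (p * s) in
  good p c (fun t => l * x (m * t)) (fun t => l * m * x1 (m * t)) (fun t => l * m * m * x2 (m * t))
    (fun t => l * m * m * m * x3 (m * t)) (l * m * m * a).
Proof.
  intros [Sx [Px [Lx [Lx1 [Lx2 [Bx2 Bx1]]]]]] l m.
  assert (Hl : 0 < l) by apply exp_pos. assert (Hm : 0 < m) by apply exp_pos.
  assert (Hmt : forall t, 0 < t -> 0 < m * t) by (intros; apply Rmult_lt_0_compat; lra).
  split; [|split; [|split; [|split; [|split; [|split]]]]].
  - intros t Ht. destruct (Sx (m * t) (Hmt t Ht)) as [D0 [D1 [D2 O]]]. split; [|split; [|split]].
    + eapply D_eq. apply D_scal. apply D_comp_lin. exact D0. simpl; ring.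
    + eapply D_eq. apply D_scal. apply D_comp_lin. exact D1. simpl; ring.
    + eapply D_eq. apply D_scal. apply D_comp_lin. exact D2. simpl; ring.
    + unfold l. rewrite rpow_scale. fold m.
      replace (exp s * m * m * m * x3 (m * t) + c * (m * rpow (x (m * t)) p) * (exp s * m * m * x2 (m * t)))
        with (exp s * m * m * m * (x3 (m * t) + c * rpow (x (m * t)) p * x2 (m * t))) by ring.
      rewrite O. ring.
  - intros t Ht. apply Rmult_le_pos. lra. apply Px. auto.
  - assert (H := rlim_mult _ _ _ _ (rlim_const l) (rlim_scale _ _ _ Hm Lx)). simpl in H.
    rewrite Rmult_0_r in H. exact H.
  - assert (H := rlim_mult _ _ _ _ (rlim_const (l * m)) (rlim_scale _ _ _ Hm Lx1)). simpl in H.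
    rewrite Rmult_0_r in H. exact H.
  - exact (rlim_mult _ _ _ _ (rlim_const (l * m * m)) (rlim_scale _ _ _ Hm Lx2)).
  - intros t Ht. destruct (Bx2 _ (Hmt t Ht)). split. repeat apply Rmult_lt_0_compat; lra.
    apply Rmult_le_compat_l; [|lra].
    left; repeat apply Rmult_lt_0_compat; lra.
  - intros t Ht. pose proof (Bx1 _ (Hmt t Ht)). apply Rmult_le_pos; [|lra]. left; apply Rmult_lt_0_compat; lra.
Qed.

Lemma exp_ge1 z : 0 <= z -> 1 <= exp z.
Proof. intros H. rewrite <- exp_0. destruct H as [H|H]. left; apply exp_increasing; auto. rewrite H; lra. Qed.

Lemma sol_pos p c beta (x x1 x2 x3 : R -> R) : 1 <= p -> 0 < c -> 0 < beta ->
  (forall t, 0 <= t -> 0 <= x t) -> sol_on p c x x1 x2 x3 -> x 0 = 0 ->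
  filterlim (fun h => (x h - x 0) / h) (at_right 0) (locally 0) -> is_lim x1 p_infty beta ->
  filterlim x (at_right 0) (locally (T:=R_UniformSpace) 0) /\ forall u, 0 < u -> 0 < x2 u.
Proof.
  intros Hp Hc Hb Px Sx X0 Hq Hinf.
  assert (Lx : filterlim x (at_right 0) (locally (T:=R_UniformSpace) 0)).
  { assert (H := rlim_mult _ _ _ _ rlim_id Hq). rewrite Rmult_0_l in H.
    apply (rlim_ext (fun t => t * ((x t - x 0) / t)) x 0 1); [lra| |exact H]. intros t Ht. rewrite X0. field. lra. }
  split; [exact Lx|].
  assert (D0 : forall t, 0 < t -> is_derive x t (x1 t)) by (intros t Ht; apply (Sx t Ht)).
  assert (D1 : forall t, 0 < t -> is_derive x1 t (x2 t)) by (intros t Ht; apply (Sx t Ht)).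
  assert (D2 : forall t, 0 < t -> is_derive x2 t (x3 t)) by (intros t Ht; apply (Sx t Ht)).
  assert (O : forall t, 0 < t -> x3 t = - c * rpow (x t) p * x2 t) by (intros t Ht; destruct (Sx t Ht) as [_ [_ [_ O]]]; lra).
  assert (NB : (forall u, 0 < u -> beta <= x1 u) -> False).
  { intros H.
    assert (Hxu : forall u, 0 < u -> beta * u <= x u).
    { intros u Hu.
      assert (L1 := rlim_minus _ _ _ _ Lx (rlim_mult _ _ _ _ (rlim_const beta) rlim_id)).
      assert (0 - beta * 0 <= x u - beta * u); [|lra].
      apply (rlim_ge _ _ _ u Hu L1). intros e He.
      assert (beta * (u - e) <= x u - x e); [|lra].
      apply (mvt_ge x x1); auto; try lra. intros s Hs; apply H; lra. }
    assert (beta <= 0); [|lra].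
    apply (rlim_le _ 0 beta 1 ltac:(lra) Hq). intros h Hh. rewrite X0.
    pose proof (Hxu h ltac:(lra)). apply Rmult_le_reg_r with h. lra.
    replace ((x h - 0) / h * h) with (x h) by (field; lra). lra. }
  assert (NEG : (forall u, 0 < u -> x2 u <= 0) -> False).
  { intros H. apply NB. intros u Hu. apply (ilim_ge _ _ _ u Hinf). intros w Hw.
    assert (x1 w - x1 u <= 0 * (w - u)); [|lra]. apply (mvt_le x1 x2); auto; try lra.
    intros s Hs; apply H; lra. }
  assert (ZP : forall t0, 0 < t0 -> x2 t0 = 0 -> forall u, 0 < u -> x2 u = 0).
  { intros t0 Ht0 Z u Hu.
    set (h := fun s => x2 s * x2 s).
    assert (Dh : forall s, 0 < s -> is_derive h s (2 * x2 s * x3 s)).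
    { intros s Hs. eapply D_eq. apply D_mult; apply D2; auto. simpl; ring. }
    assert (h u <= 0 -> x2 u = 0).
    { intros Hh. unfold h in Hh. pose proof (Rle_0_sqr (x2 u)). unfold Rsqr in *.
      assert (x2 u * x2 u = 0) by lra. apply Rmult_integral in H0. lra. }
    apply H. destruct (Rle_dec t0 u).
    - assert (h u - h t0 <= 0 * (u - t0)); [|unfold h in *; rewrite Z in *; lra].
      apply (mvt_le h (fun s => 2 * x2 s * x3 s) t0 u 0); [lra|exact Dh|]. intros s Hs. rewrite O by lra.
      pose proof (rpow_nonneg (x s) p). pose proof (Rle_0_sqr (x2 s)). unfold Rsqr in *.
      assert (0 <= c * rpow (x s) p * (x2 s * x2 s)) by (apply Rmult_le_pos; [apply Rmult_le_pos|]; lra). nra.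
    - destruct (continuity_ab_maj x u t0) as [Mx [HMx HMx']]. lra.
      { intros s Hs. apply (D_cont x s (x1 s)). apply D0; lra. }
      set (K := rpow (x Mx) p).
      set (k := fun s => h s * exp (2 * c * K * s)).
      assert (Dk : forall s, 0 < s -> is_derive k s ((2 * x2 s * x3 s) * exp (2 * c * K * s) + h s * (2 * c * K * exp (2 * c * K * s)))).
      { intros s Hs. eapply D_eq. apply D_mult. apply Dh; auto. apply D_exp_lin. simpl; ring. }
      assert (0 * (t0 - u) <= k t0 - k u).
      { apply (mvt_ge k (fun s => (2 * x2 s * x3 s) * exp (2 * c * K * s) + h s * (2 * c * K * exp (2 * c * K * s))) u t0 0); [lra|exact Dk|]. intros s Hs. rewrite O by lra. unfold h.
        assert (rpow (x s) p <= K). { apply rpow_mono. lra. split. apply Px; lra. apply HMx; lra. }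
        pose proof (exp_pos (2 * c * K * s)). pose proof (Rle_0_sqr (x2 s)). unfold Rsqr in *.
        assert (0 <= c * (x2 s * x2 s) * (K - rpow (x s) p) * exp (2 * c * K * s)) by
          (apply Rmult_le_pos; [apply Rmult_le_pos; [apply Rmult_le_pos|]|]; lra).
        nra. }
      unfold k, h in H0. rewrite Z in H0. pose proof (exp_pos (2 * c * K * u)).
      unfold h. assert (x2 u * x2 u * exp (2 * c * K * u) <= 0) by lra.
      pose proof (Rle_0_sqr (x2 u)). unfold Rsqr in *. nra. }
  intros u Hu. destruct (Rlt_or_le 0 (x2 u)) as [|Hle]; [auto|exfalso].
  apply NEG. intros v Hv. destruct (Rle_or_lt (x2 v) 0) as [|Hvp]; [auto|exfalso].
  destruct (Req_dec (x2 u) 0) as [Z|Z].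
  { pose proof (ZP u Hu Z v Hv). lra. }
  assert (Hc2 : forall s, 0 < s -> continuity_pt x2 s) by (intros s Hs; apply (D_cont x2 s (x3 s)); auto).
  destruct (Rlt_or_le u v).
  - destruct (Ranalysis5.IVT_interv x2 u v) as [z [Hz Hz']]; auto. intros s Hs; apply Hc2; lra. lra.
    pose proof (ZP z ltac:(lra) Hz' v Hv). lra.
  - destruct (Req_dec u v). subst; lra.
    destruct (Ranalysis5.IVT_interv (fun s => - x2 s) v u) as [z [Hz Hz']]; auto.
    intros s Hs; apply continuity_pt_opp; apply Hc2; lra. lra. lra. lra.
    assert (x2 z = 0) by lra. pose proof (ZP z ltac:(lra) H1 v Hv). lra.
Qed.

Lemma sol_good p c beta (x x1 x2 x3 : R -> R) : 1 <= p -> 0 < c -> 0 < beta ->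
  (forall t, 0 <= t -> 0 <= x t) -> sol_on p c x x1 x2 x3 -> x 0 = 0 ->
  filterlim (fun h => (x h - x 0) / h) (at_right 0) (locally 0) -> is_lim x1 p_infty beta ->
  exists a, good p c x x1 x2 x3 a.
Proof.
  intros Hp Hc Hb Px Sx X0 Hq Hinf.
  destruct (sol_pos p c beta x x1 x2 x3 Hp Hc Hb Px Sx X0 Hq Hinf) as [Lx POS].
  assert (D0 : forall t, 0 < t -> is_derive x t (x1 t)) by (intros t Ht; apply (Sx t Ht)).
  assert (D1 : forall t, 0 < t -> is_derive x1 t (x2 t)) by (intros t Ht; apply (Sx t Ht)).
  assert (D2 : forall t, 0 < t -> is_derive x2 t (x3 t)) by (intros t Ht; apply (Sx t Ht)).
  assert (O : forall t, 0 < t -> x3 t = - c * rpow (x t) p * x2 t) by (intros t Ht; destruct (Sx t Ht) as [_ [_ [_ O]]]; lra).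
  assert (X2dec : forall s t, 0 < s <= t -> x2 t <= x2 s).
  { intros s t Hst. assert (x2 t - x2 s <= 0 * (t - s)); [|lra].
    apply (mvt_le x2 x3); auto. intros u Hu. rewrite O by lra.
    pose proof (rpow_nonneg (x u) p). pose proof (POS u ltac:(lra)).
    assert (0 <= c * rpow (x u) p * x2 u) by (apply Rmult_le_pos; [apply Rmult_le_pos|]; lra). lra. }
  assert (X1inc : forall s t, 0 < s <= t -> x1 s <= x1 t).
  { intros s t Hst. assert (0 * (t - s) <= x1 t - x1 s); [|lra].
    apply (mvt_ge x1 x2); auto. intros u Hu. pose proof (POS u ltac:(lra)). lra. }
  assert (X1b : forall u, 0 < u -> x1 u <= beta).
  { intros u Hu. apply (ilim_le _ _ _ u Hinf). intros w Hw. apply X1inc; lra. }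
  assert (Xb : forall u, 0 < u -> x u <= beta * u).
  { intros u Hu.
    assert (L1 := rlim_minus _ _ _ _ Lx (rlim_mult _ _ _ _ (rlim_const beta) rlim_id)).
    assert (x u - beta * u <= 0 - beta * 0); [|lra].
    apply (rlim_le _ _ _ u Hu L1). intros e He.
    assert (x u - x e <= beta * (u - e)); [|lra].
    apply (mvt_le x x1); auto; try lra. intros s Hs; apply X1b; lra. }
  set (K := rpow beta p).
  set (B := x2 1 * exp (c * K)).
  assert (X2b : forall s, 0 < s <= 1 -> x2 s <= B).
  { intros s Hs.
    set (k := fun u => x2 u * exp (c * K * u)).
    assert (Dk : forall u, 0 < u -> is_derive k u (x3 u * exp (c * K * u) + x2 u * (c * K * exp (c * K * u)))).
    { intros u Hu. eapply D_eq. apply D_mult. apply D2; auto. apply D_exp_lin. simpl; ring. }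
    assert (0 * (1 - s) <= k 1 - k s).
    { apply (mvt_ge k (fun u => x3 u * exp (c * K * u) + x2 u * (c * K * exp (c * K * u))) s 1 0); [lra|exact Dk|]. intros u Hu. rewrite O by lra.
      assert (rpow (x u) p <= K). { apply rpow_mono. lra. split. apply Px; lra. pose proof (Xb u ltac:(lra)). nra. }
      pose proof (exp_pos (c * K * u)). pose proof (POS u ltac:(lra)).
      assert (0 <= c * x2 u * (K - rpow (x u) p) * exp (c * K * u)) by
        (apply Rmult_le_pos; [apply Rmult_le_pos; [apply Rmult_le_pos|]|]; lra).
      nra. }
    unfold k in H. unfold B. replace (c * K * 1) with (c * K) in H by ring.
    assert (1 <= exp (c * K * s)). { apply exp_ge1. pose proof (rpow_nonneg beta p). fold K in H0.
      apply Rmult_le_pos; [apply Rmult_le_pos|]; lra. }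
    pose proof (POS s ltac:(lra)). nra. }
  set (E := fun z => exists s, 0 < s <= 1 /\ z = x2 s).
  destruct (completeness E) as [a [Ha1 Ha2]].
  { exists B. intros z [s [Hs ->]]. apply X2b; auto. }
  { exists (x2 1). exists 1. split; [lra|auto]. }
  assert (X2a : forall t, 0 < t -> x2 t <= a).
  { intros t Ht. destruct (Rle_dec t 1).
    - apply Ha1. exists t; split; [lra|auto].
    - apply Rle_trans with (x2 1). apply X2dec; lra. apply Ha1. exists 1; split; [lra|auto]. }
  assert (Hapos : 0 < a). { pose proof (X2a 1 ltac:(lra)). pose proof (POS 1 ltac:(lra)). lra. }
  assert (Lx2 : filterlim x2 (at_right 0) (locally (T:=R_UniformSpace) a)).
  { apply rlim_iff. intros eps He.
    destruct (classic (exists s, 0 < s <= 1 /\ a - eps < x2 s)) as [[s0 [Hs0 Hs0']]|Hn].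
    - exists s0. split; [lra|]. intros t Ht. pose proof (X2dec t s0 ltac:(lra)). pose proof (X2a t ltac:(lra)).
      apply Rabs_def1; lra.
    - exfalso. assert (a <= a - eps); [|lra]. apply Ha2. intros z [s [Hs ->]].
      destruct (Rle_or_lt (x2 s) (a - eps)) as [|Hlt]; auto. exfalso; apply Hn; exists s; auto. }
  assert (Up : forall u, 0 < u -> x u <= x1 u * u).
  { intros u Hu.
    assert (L1 := rlim_minus _ _ _ _ Lx (rlim_mult _ _ _ _ (rlim_const (x1 u)) rlim_id)).
    assert (x u - x1 u * u <= 0 - x1 u * 0); [|lra].
    apply (rlim_le _ _ _ u Hu L1). intros e He.
    assert (x u - x e <= x1 u * (u - e)); [|lra].
    apply (mvt_le x x1); auto; try lra. intros s Hs; apply X1inc; lra. }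
  assert (Low : forall u, 0 < u -> (x1 u - a * u) * u <= x u).
  { intros u Hu.
    assert (L1 := rlim_minus _ _ _ _ Lx (rlim_mult _ _ _ _ (rlim_const (x1 u - a * u)) rlim_id)).
    assert (0 - (x1 u - a * u) * 0 <= x u - (x1 u - a * u) * u); [|lra].
    apply (rlim_ge _ _ _ u Hu L1). intros e He.
    assert ((x1 u - a * u) * (u - e) <= x u - x e); [|lra].
    apply (mvt_ge x x1); auto; try lra. intros s Hs.
    assert (x1 u - x1 s <= a * (u - s)). { apply (mvt_le x1 x2); auto; try lra. intros w Hw. apply X2a; lra. }
    assert (a * (u - s) <= a * u) by (apply Rmult_le_compat_l; lra). lra. }
  assert (Lx1 : filterlim x1 (at_right 0) (locally (T:=R_UniformSpace) 0)).
  { apply rlim_iff. intros eps He. rewrite rlim_iff in Hq. destruct (Hq (eps / 2)) as [d [Hd Hd']]; [lra|].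
    exists (Rmin d (eps / (2 * (a + 1)))). split.
    { apply Rmin_pos; auto. apply Rdiv_lt_0_compat; lra. }
    intros t Ht. pose proof (Rmin_l d (eps / (2 * (a + 1)))). pose proof (Rmin_r d (eps / (2 * (a + 1)))).
    specialize (Hd' t ltac:(lra)). rewrite X0 in Hd'. rewrite Rminus_0_r in *.
    apply Rabs_def2 in Hd'.
    pose proof (Up t ltac:(lra)). pose proof (Low t ltac:(lra)).
    assert (E1 : (x t - 0) / t = x t / t) by (unfold Rminus; rewrite Ropp_0, Rplus_0_r; auto).
    rewrite E1 in Hd'.
    assert (x t / t <= x1 t). { apply Rmult_le_reg_r with t. lra. replace (x t / t * t) with (x t) by (field; lra). lra. }
    assert (x1 t - a * t <= x t / t). { apply Rmult_le_reg_r with t. lra. replace (x t / t * t) with (x t) by (field; lra). lra. }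
    assert (a * t < eps / 2).
    { assert (Tl : t < eps / (2 * (a + 1))) by lra.
      apply Rmult_lt_compat_l with (r := a + 1) in Tl; [|lra].
      replace ((a + 1) * (eps / (2 * (a + 1)))) with (eps / 2) in Tl by (field; lra). nra. }
    apply Rabs_def1; lra. }
  exists a. split; [exact Sx|]. split. intros t Ht; apply Px; lra.
  split; [exact Lx|]. split; [exact Lx1|]. split; [exact Lx2|]. split.
  intros t Ht; split; [apply POS|apply X2a]; auto.
  intros u Hu. apply (rlim_ge x1 0 (x1 u) u Hu Lx1). intros e He. apply X1inc; lra.
Qed.

Lemma ilim_unique (f g : R -> R) (L1 L2 : R) : is_lim f p_infty L1 -> is_lim g p_infty L2 ->
  (forall t, 0 < t -> f t = g t) -> L1 = L2.
Proof. intros Hf Hg H. rewrite ilim_iff in *.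
  destruct (Req_dec L1 L2) as [|Hn]; auto. exfalso.
  assert (He : 0 < Rabs (L1 - L2) / 2) by (apply Rdiv_lt_0_compat; [apply Rabs_pos_lt; lra|lra]).
  destruct (Hf _ He) as [M1 H1]. destruct (Hg _ He) as [M2 H2].
  set (t := Rmax 1 (Rmax M1 M2) + 1).
  pose proof (Rmax_l 1 (Rmax M1 M2)). pose proof (Rmax_r 1 (Rmax M1 M2)).
  pose proof (Rmax_l M1 M2). pose proof (Rmax_r M1 M2).
  specialize (H1 t ltac:(unfold t; lra)). specialize (H2 t ltac:(unfold t; lra)).
  rewrite H in H1 by (unfold t; lra).
  assert (Rabs (L1 - L2) <= Rabs (g t - L1) + Rabs (g t - L2)).
  { replace (L1 - L2) with ((g t - L2) - (g t - L1)) by ring.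
    eapply Rle_trans. apply Rabs_triang. rewrite Rabs_Ropp. lra. }
  lra. Qed.

Theorem theorem2 (p c beta : R) (hp : 1 <= p) (hc : 0 < c) (hb : 0 < beta)
  (x y : R -> R) :
  is_solution p c beta x -> is_solution p c beta y ->
  forall t, 0 <= t -> x t = y t.
Proof.
  intros [x1 [x2 [x3 [Px [Sx [X0 [Hq Hinf]]]]]]] [y1 [y2 [y3 [Py [Sy [Y0 [Hq' Hinf']]]]]]] t Ht.
  destruct Ht as [Ht|Ht]; [| subst; rewrite X0, Y0; auto].
  destruct (sol_good p c beta x x1 x2 x3 hp hc hb Px Sx X0 Hq Hinf) as [a Ga].
  destruct (sol_good p c beta y y1 y2 y3 hp hc hb Py Sy Y0 Hq' Hinf') as [b Gb].
  assert (Ha : 0 < a) by (destruct Ga as [_ [_ [_ [_ [_ [B _]]]]]]; destruct (B 1); lra).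
  assert (Hb' : 0 < b) by (destruct Gb as [_ [_ [_ [_ [_ [B _]]]]]]; destruct (B 1); lra).
  set (s := ln (b / a) / (1 + 2 * p)).
  pose proof (good_scale p c x x1 x2 x3 a s Ga) as Gs. simpl in Gs.
  set (l := exp s) in Gs. set (m := exp (p * s)) in Gs.
  assert (Elm : l * m * m * a = b).
  { unfold l, m. rewrite <- !exp_plus.
    replace (s + p * s + p * s) with (ln (b / a)) by (unfold s; field; lra).
    rewrite exp_ln. field; lra. apply Rdiv_lt_0_compat; lra. }
  rewrite Elm in Gs.
  assert (Eq := uniq p c _ _ _ _ y y1 y2 y3 b hp hc Gs Gb).
  assert (E1 : forall u, 0 < u -> l * m * x1 (m * u) = y1 u).
  { intros u Hu. destruct Gs as [Ss _]. destruct (Ss u Hu) as [Dx _]. destruct (Sy u Hu) as [Dy _].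
    rewrite <- (is_derive_unique _ _ _ Dx). rewrite <- (is_derive_unique _ _ _ Dy).
    apply Derive_ext_loc. exists (mkposreal u Hu). intros v Hv. apply Eq.
    change (Rabs (v - u) < u) in Hv. apply Rabs_def2 in Hv. lra. }
  assert (Hl : is_lim (fun u => l * m * x1 (m * u)) p_infty (l * m * beta)).
  { apply ilim_scale; auto. apply exp_pos. apply Rmult_lt_0_compat; apply exp_pos. }
  assert (El : l * m * beta = beta) by exact (ilim_unique _ _ _ _ Hl Hinf' E1).
  assert (Hlm : l * m = 1). { apply Rmult_eq_reg_r with beta; lra. }
  assert (Hs : s = 0).
  { unfold l, m in Hlm. rewrite <- exp_plus in Hlm.
    assert (ln (exp (s + p * s)) = ln 1) by (rewrite Hlm; auto). rewrite ln_exp, ln_1 in H.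
    assert ((1 + p) * s = 0) by lra. apply Rmult_integral in H0. lra. }
  assert (l = 1) by (unfold l; rewrite Hs; apply exp_0).
  assert (m = 1) by (unfold m; rewrite Hs, Rmult_0_r; apply exp_0).
  rewrite <- (Eq t Ht). rewrite H, H0. ring_simplify (1 * t). ring.
Qed.
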